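(* Let $\mathcal{C}$ be a binary $[n,n/2]$ even formally self-dual code, and let $f_{\mathcal{C}}(t)=W_{\mathcal{C}}(\sqrt{1+t},\sqrt{1-t})$ for $0<t<1$. Then $$f_{\mathcal{C}}(t)=2^{n/2}\sum_{r=0}^{\lfloor n/8\rfloor}a_r\,(t^4-t^2+1)^r,$$ where $a_r\in\mathbb{Q}$ and $\sum_{r=0}^{\lfloor n/8\rfloor}a_r=1$.
   Context: For a binary linear code $\mathcal{C}\subseteq\mathbb{F}_2^n$, $W_{\mathcal{C}}(x,y)=\sum_{w=0}^n A_w x^{n-w}y^w$ with $A_w$ the number of codewords of Hamming weight $w$. $\mathcal{C}$ is formally self-dual if $W_{\mathcal{C}}=W_{\mathcal{C}^\perp}$, and even if all codewords have even Hamming weight. *)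

(* Defs.v *)
From HB Require Import structures.
From mathcomp Require Import all_boot all_order all_algebra.
From mathcomp Require Import reals.
Set Implicit Arguments. Unset Strict Implicit. Unset Printing Implicit Defensive.
Import Order.TTheory GRing.Theory Num.Theory.

Definition hwt n (v : 'rV['F_2]_n) : nat := #|[set i | v ord0 i != 0%R]|.

Definition in_dual n (C : {vspace 'rV['F_2]_n}) (v : 'rV['F_2]_n) : bool :=
  [forall c : 'rV['F_2]_n, (c \in C) ==> (((v *m c^T)%R) ord0 ord0 == 0%R)].

Definition wdist n (C : {vspace 'rV['F_2]_n}) (w : nat) : nat :=
  #|[set c : 'rV['F_2]_n | (c \in C) && (hwt c == w)]|.
Definition wdist_dual n (C : {vspace 'rV['F_2]_n}) (w : nat) : nat :=
  #|[set v : 'rV['F_2]_n | in_dual C v && (hwt v == w)]|.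

Definition wenum (R : comRingType) n (C : {vspace 'rV['F_2]_n}) (x y : R) : R :=
  (\sum_(w < n.+1) (wdist C w)%:R * x ^+ (n - w) * y ^+ w)%R.

(* Formally self-dual: W_C = W_{C^perp} as polynomials, i.e. equal coefficients *)
Definition formally_self_dual n (C : {vspace 'rV['F_2]_n}) : Prop :=
  forall w, wdist C w = wdist_dual C w.

Definition even_code n (C : {vspace 'rV['F_2]_n}) : Prop :=
  forall c, c \in C -> ~~ odd (hwt c).

(* Main.v *)
Require Import Defs.
From HB Require Import structures.
From mathcomp Require Import all_boot all_order all_algebra all_field.
From mathcomp Require Import reals ring lra zify.
Import Order.TTheory GRing.Theory Num.Theory.
Local Open Scope ring_scope.
Set Implicit Arguments. Unset Strict Implicit. Unset Printing Implicit Defensive.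

Lemma F2_cases (b : 'F_2) : b = 0 \/ b = 1.
Proof. case: b => [[|[|k]] Hk]; [left|right|by []]; exact: val_inj. Qed.

Lemma sF2 (R : nmodType) (F : 'F_2 -> R) : \sum_(b : 'F_2) F b = F 0 + F 1.
Proof.
rewrite (bigD1 0) //= (bigD1 1) //= big1 ?addr0 // => b /andP[b1 b0].
by case: (F2_cases b) b1 b0 => ->; rewrite eqxx.
Qed.

Lemma hwt_le n (v : 'rV['F_2]_n) : (hwt v <= n)%N.
Proof. by rewrite /hwt (leq_trans (max_card _)) // card_ord. Qed.

Definition Wc (R : comNzRingType) n (P : pred 'rV['F_2]_n) (x y : R) : R :=
  \sum_(c | P c) x ^+ (n - hwt c) * y ^+ hwt c.

Lemma wsum_part (R : comNzRingType) n (P : pred 'rV['F_2]_n) (F : nat -> R) :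
  \sum_(w < n.+1) (#|[set c | P c && (hwt c == w)]|)%:R * F w =
  \sum_(c | P c) F (hwt c).
Proof.
rewrite (partition_big (fun c => (inord (hwt c) : 'I_n.+1)) xpredT) //=.
apply: eq_bigr => w _.
have E : forall c : 'rV['F_2]_n, (inord (hwt c) == w :> 'I_n.+1) = (hwt c == w).
  move=> c; have hl : (hwt c < n.+1)%N by rewrite ltnS hwt_le.
  apply/eqP/eqP => [<-|H]; first by rewrite inordK.
  by apply: val_inj; rewrite /= inordK // H.
rewrite (eq_bigl (fun c => P c && (hwt c == w))); last by move=> c; rewrite E.
rewrite (eq_bigr (fun _ => F w)); last by move=> c /andP[_ /eqP ->].
by rewrite sumr_const cardsE mulr_natl.
Qed.


Section MW.
Variable R : numDomainType.

Definition sgn (b : 'F_2) : R := if b == 0 then 1 else -1.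

Lemma sgnD a b : sgn (a + b) = sgn a * sgn b.
Proof.
by case: (F2_cases a) => ->; case: (F2_cases b) => ->; rewrite /sgn /=;
  rewrite ?mulr1 ?mul1r ?mulrNN ?mulr1.
Qed.

Lemma sgn1 b : b != 0 -> sgn b = -1.
Proof. by rewrite /sgn => /negbTE ->. Qed.

Definition dot n (v c : 'rV['F_2]_n) : 'F_2 := (v *m c^T) ord0 ord0.

Lemma dotD n (v c d : 'rV['F_2]_n) : dot v (c + d) = dot v c + dot v d.
Proof. by rewrite /dot linearD /= mulmxDr mxE. Qed.

Lemma sgn_dot n (v c : 'rV['F_2]_n) :
  sgn (dot v c) = \prod_i sgn (v ord0 i * c ord0 i).
Proof.
rewrite /dot mxE.
rewrite (big_morph sgn sgnD (id1 := 1)) //.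
by apply: eq_bigr => i _; rewrite mxE.
Qed.

Lemma char_sum n (C : {vspace 'rV['F_2]_n}) v :
  \sum_(c | c \in C) sgn (dot v c) = if in_dual C v then (#|C|)%:R else 0.
Proof.
case: ifP => [/forallP H|/negbT/forallPn [c0]].
  rewrite (eq_bigr (fun _ => 1)) ?sumr_const //.
  by move=> c cC; move: (H c); rewrite cC /= => /eqP; rewrite /sgn /dot => ->.
rewrite negb_imply => /andP[c0C hc0].
set S := (X in X = _).
have : S = - S.
  rewrite {1}/S (reindex_inj (addIr c0)) /=.
  rewrite (eq_bigl (fun c => c \in C)); last by move=> c; rewrite rpredDr.
  rewrite /S -sumrN; apply: eq_bigr => c _.
  by rewrite dotD sgnD (@sgn1 (dot v c0) hc0) mulrN1.
move/eqP; rewrite -subr_eq0 opprK -mulr2n mulrn_eq0 /= => /eqP //.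
Qed.


Lemma pow_prod n (a : pred 'I_n) (x y : R) :
  \prod_i (if a i then y else x) = x ^+ (n - #|a|) * y ^+ #|a|.
Proof.
rewrite (bigID a) /=.
rewrite (eq_bigr (fun _ => y)); last by move=> i; case: (a i).
rewrite [X in _ * X](eq_bigr (fun _ => x)); last by move=> i; case: (a i).
rewrite (eq_bigl (mem a)) // prodr_const.
rewrite (eq_bigl (mem [predC a])) // prodr_const.
have := cardC a; rewrite card_ord => E.
have E2 : (n - #|a| = #|[predC a]|)%N by rewrite -[X in (X - _)%N]E addKn.
by rewrite E2 mulrC.
Qed.

Lemma hwt_prod n (v : 'rV['F_2]_n) (x y : R) :
  x ^+ (n - hwt v) * y ^+ hwt v = \prod_i (if v ord0 i != 0 then y else x).
Proof. by rewrite pow_prod /hwt cardsE. Qed.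

Lemma expand n (c : 'rV['F_2]_n) (x y : R) :
  \sum_(v : 'rV['F_2]_n) sgn (dot v c) * (x ^+ (n - hwt v) * y ^+ hwt v) =
  (x + y) ^+ (n - hwt c) * (x - y) ^+ hwt c.
Proof.
under eq_bigr do rewrite hwt_prod sgn_dot -big_split /=.
rewrite (reindex (fun f : {ffun 'I_n -> 'F_2} => \row_i f i)) /=; last first.
  exists (fun v : 'rV['F_2]_n => [ffun i => v ord0 i]) => f _.
    by apply/ffunP => i; rewrite ffunE mxE.
  by apply/rowP => i; rewrite mxE ffunE.
under eq_bigr do under eq_bigr do rewrite mxE.
rewrite -(bigA_distr_bigA (fun i b => sgn (b * c ord0 i) * (if b != 0 then y else x))) /=.
rewrite hwt_prod; apply: eq_bigr => i _.
rewrite sF2 mul0r mul1r /=.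
by case: (F2_cases (c ord0 i)) => ->; rewrite /sgn /= ?mul1r ?mulN1r.
Qed.


Lemma macwilliams n (C : {vspace 'rV['F_2]_n}) (x y : R) :
  (#|C|)%:R * Wc (in_dual C) x y = Wc (fun c => c \in C) (x + y) (x - y).
Proof.
rewrite /Wc mulr_sumr big_mkcond /=.
rewrite (eq_bigr (fun v => \sum_(c | c \in C) sgn (dot v c) * (x ^+ (n - hwt v) * y ^+ hwt v))); last first.
  by move=> v _; rewrite -mulr_suml char_sum; case: ifP => _ //; rewrite mul0r.
rewrite exchange_big /=; apply: eq_bigr => c _.
exact: expand.
Qed.

End MW.


Lemma half_arith n h : ~~ odd n -> ~~ odd h -> (h <= n)%N ->
  ((n - h)./2 + h./2 = n./2)%N.
Proof.
move=> on oh hn; rewrite -{1}(odd_double_half n) -{1 2}(odd_double_half h).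
rewrite (negbTE on) (negbTE oh) !add0n -doubleB !doubleK.
by rewrite subnK // half_leq.
Qed.

Lemma even_sub n h : ~~ odd n -> ~~ odd h -> (h <= n)%N -> ~~ odd (n - h).
Proof. by move=> on oh hn; rewrite oddB // (negbTE on) (negbTE oh). Qed.

Lemma expr_half (R : comNzRingType) (x : R) k : ~~ odd k -> x ^+ k = (x ^+ 2) ^+ k./2.
Proof.
move=> ok; rewrite -exprM; congr (x ^+ _).
by rewrite -{1}(odd_double_half k) (negbTE ok) add0n -muln2 mulnC.
Qed.

Definition Ws (R : comNzRingType) n (C : {vspace 'rV['F_2]_n}) (a b : R) : R :=
  \sum_(c | c \in C) a ^+ ((n - hwt c)./2) * b ^+ (hwt c)./2.

Lemma wenum_Wc (R : comNzRingType) n (C : {vspace 'rV['F_2]_n}) (x y : R) :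
  wenum C x y = Wc (fun c => c \in C) x y.
Proof.
rewrite /wenum /Wc -(wsum_part (fun c => c \in C) (fun w => x ^+ (n - w) * y ^+ w)).
by apply: eq_bigr => w _; rewrite mulrA.
Qed.

Lemma wenum_dual (R : comNzRingType) n (C : {vspace 'rV['F_2]_n}) (x y : R) :
  formally_self_dual C -> wenum C x y = Wc (in_dual C) x y.
Proof.
move=> fsd; rewrite /wenum /Wc -(wsum_part (in_dual C) (fun w => x ^+ (n - w) * y ^+ w)).
by apply: eq_bigr => w _; rewrite mulrA fsd.
Qed.

Lemma Wc_Ws (R : comNzRingType) n (C : {vspace 'rV['F_2]_n}) (x y : R) :
  ~~ odd n -> even_code C -> Wc (fun c => c \in C) x y = Ws C (x ^+ 2) (y ^+ 2).
Proof.
move=> on ec; apply: eq_bigr => c cC.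
have oh := ec c cC.
by rewrite (expr_half x (even_sub on oh (hwt_le c))) (expr_half y oh).
Qed.

Lemma Ws_hom (R : comNzRingType) n (C : {vspace 'rV['F_2]_n}) (l a b : R) :
  ~~ odd n -> even_code C -> Ws C (l * a) (l * b) = l ^+ n./2 * Ws C a b.
Proof.
move=> on ec; rewrite /Ws mulr_sumr; apply: eq_bigr => c cC.
rewrite !exprMn -(half_arith on (ec c cC) (hwt_le c)) exprD.
by rewrite mulrACA.
Qed.

Lemma Ws_rmorph (R S : comNzRingType) (f : {rmorphism R -> S}) n
  (C : {vspace 'rV['F_2]_n}) (a b : R) : f (Ws C a b) = Ws C (f a) (f b).
Proof.
by rewrite /Ws rmorph_sum; apply: eq_bigr => c _; rewrite rmorphM !rmorphXn.
Qed.

Lemma Ws11 (R : comNzRingType) n (C : {vspace 'rV['F_2]_n}) :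
  Ws C (1 : R) 1 = (#|C|)%:R.
Proof.
rewrite /Ws (eq_bigr (fun _ => 1)) ?sumr_const // => c _.
by rewrite !expr1n mulr1.
Qed.


Lemma MWeq (R : realType) n (C : {vspace 'rV['F_2]_n}) (x y : R) :
  \dim C = n./2 -> formally_self_dual C ->
  2 ^+ n./2 * wenum C x y = Wc (fun c => c \in C) (x + y) (x - y).
Proof.
move=> dC fsd; rewrite (wenum_dual _ _ fsd) -macwilliams.
by rewrite card_vspace card_Fp // dC natrX.
Qed.

Lemma key (R : realType) n (C : {vspace 'rV['F_2]_n}) (a b : R) :
  ~~ odd n -> \dim C = n./2 -> even_code C -> formally_self_dual C ->
  0 <= a -> 0 <= b -> a + b = 2 ->
  Ws C a b = Ws C (1 + Num.sqrt a * Num.sqrt b) (1 - Num.sqrt a * Num.sqrt b).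
Proof.
move=> on dC ec fsd ha hb hab.
set x := Num.sqrt a; set y := Num.sqrt b.
have hx : x ^+ 2 = a by rewrite sqr_sqrtr.
have hy : y ^+ 2 = b by rewrite sqr_sqrtr.
have h2 : (2 : R) ^+ n./2 != 0 by rewrite expf_neq0 // pnatr_eq0.
apply: (mulfI h2).
rewrite -{1}hx -{1}hy -Wc_Ws // -wenum_Wc MWeq // Wc_Ws //.
have e1 : (x + y) ^+ 2 = 2 * (1 + x * y).
  rewrite sqrrD hx hy; lra.
have e2 : (x - y) ^+ 2 = 2 * (1 - x * y).
  rewrite sqrrB hx hy; lra.
by rewrite e1 e2 Ws_hom.
Qed.

Lemma fsymW (R : realType) n (C : {vspace 'rV['F_2]_n}) (t : R) :
  ~~ odd n -> \dim C = n./2 -> even_code C -> formally_self_dual C ->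
  -1 <= t <= 1 ->
  Ws C (1 + t) (1 - t) = Ws C (1 + Num.sqrt (1 - t ^+ 2)) (1 - Num.sqrt (1 - t ^+ 2)) /\
  Ws C (1 - t) (1 + t) = Ws C (1 + Num.sqrt (1 - t ^+ 2)) (1 - Num.sqrt (1 - t ^+ 2)).
Proof.
move=> on dC ec fsd /andP[t1 t2].
have h1 : 0 <= 1 + t by lra.
have h2 : 0 <= 1 - t by lra.
have e : 1 - t ^+ 2 = (1 + t) * (1 - t) by ring.
split.
  by rewrite (key on dC ec fsd h1 h2) ?e ?sqrtrM //; lra.
by rewrite (key on dC ec fsd h2 h1) ?e ?sqrtrM 1?mulrC //; lra.
Qed.


Definition ev (R : realType) (t : R) (p : {poly rat}) : R := (map_poly ratr p).[t].

Lemma ev_comp (R : realType) (t : R) p q : ev t (p \Po q) = ev (ev t q) p.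
Proof. by rewrite /ev map_comp_poly horner_comp. Qed.

Lemma evX (R : realType) (t : R) : ev t 'X = t.
Proof. by rewrite /ev map_polyX hornerX. Qed.

Lemma ev1 (R : realType) (t : R) : ev t 1 = 1.
Proof. by rewrite /ev rmorph1 hornerC. Qed.

Lemma evC (R : realType) (t : R) c : ev t c%:P = ratr c.
Proof. by rewrite /ev map_polyC hornerC. Qed.

Lemma evD (R : realType) (t : R) p q : ev t (p + q) = ev t p + ev t q.
Proof. by rewrite /ev rmorphD hornerD. Qed.

Lemma evN (R : realType) (t : R) p : ev t (- p) = - ev t p.
Proof. by rewrite /ev rmorphN hornerN. Qed.

Lemma evB (R : realType) (t : R) p q : ev t (p - q) = ev t p - ev t q.
Proof. by rewrite evD evN. Qed.

Lemma ev_Ws (R : realType) (t : R) n (C : {vspace 'rV['F_2]_n}) a b :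
  ev t (Ws C a b) = Ws C (ev t a) (ev t b).
Proof.
rewrite /ev (Ws_rmorph (map_poly ratr)) -horner_evalE (Ws_rmorph (horner_eval t)).
by rewrite ?horner_evalE.
Qed.

Lemma Zpoly (R : realType) (P : {poly rat}) :
  (forall t : R, 0 < t < 1 -> ev t P = 0) -> P = 0.
Proof.
move=> H; apply/eqP; apply/negPn/negP => P0.
have Q0 : map_poly (ratr : rat -> R) P != 0 by rewrite map_poly_eq0.
pose rs := [seq ((k.+2)%:R : R)^-1 | k <- iota 0 (size P)].
have := max_poly_roots Q0 (rs := rs).
rewrite size_map size_iota size_map_poly ltnn => H1.
suff : false by []. apply: H1.
  apply/allP => r /mapP[k _ ->]; rewrite /root; apply/eqP; apply: H.
  rewrite invr_gt0 ltr0n /= invf_lt1 ?ltr0n // ltr1n //.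
rewrite map_inj_uniq ?iota_uniq // => i j /invr_inj /eqP.
by rewrite eqr_nat => /eqP [].
Qed.

Lemma evenP (p : {poly rat}) : p \Po (- 'X) = p -> p = even_poly p \Po 'X^2.
Proof.
have E := poly_even_odd p.
set e := even_poly p \Po 'X^2; set o := odd_poly p \Po 'X^2.
have hX : 'X^2 \Po (- 'X) = 'X^2 :> {poly rat}.
  by rewrite rmorphXn /= comp_polyX sqrrN.
have ee : e \Po (- 'X) = e by rewrite /e -comp_polyA hX.
have oe : o \Po (- 'X) = o by rewrite /o -comp_polyA hX.
have pN : p \Po (- 'X) = e - o * 'X.
  by rewrite -{1}E rmorphD rmorphM /= ee oe comp_polyX mulrN.
rewrite pN => H.
have h2 : o * 'X * 2%:R = (e + o * 'X) - (e - o * 'X) by ring.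
rewrite E H subrr -polyC_natr in h2; move/eqP: h2. rewrite mulf_eq0 polyC_eq0 pnatr_eq0 orbF => /eqP o0.
by move: H; rewrite o0 subr0.
Qed.


Lemma evXn (R : realType) (t : R) k : ev t 'X^k = t ^+ k.
Proof. by rewrite /ev map_polyXn hornerXn. Qed.

Theorem lemma5 (R : realType) (n : nat) (C : {vspace 'rV['F_2]_n}) :
  ~~ odd n -> \dim C = n./2 -> even_code C -> formally_self_dual C ->
  exists a : 'I_(n %/ 8).+1 -> rat,
    \sum_(r < (n %/ 8).+1) a r = 1 /\
    forall t : R, 0 < t < 1 ->
      wenum C (Num.sqrt (1 + t)) (Num.sqrt (1 - t)) =
      2 ^+ (n./2) * \sum_(r < (n %/ 8).+1) ratr (a r) * (t ^+ 4 - t ^+ 2 + 1) ^+ r.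
Proof.
move=> hn dC ec fsd.
pose F : {poly rat} := Ws C (1 + 'X) (1 - 'X).
have evF : forall t : R, ev t F = Ws C (1 + t) (1 - t).
  by move=> t; rewrite ev_Ws evD evB ev1 evX.
have FN : F \Po (- 'X) = F.
  apply/eqP; rewrite -subr_eq0; apply/eqP; apply: (Zpoly (R := R)) => t /andP[t0 t1].
  have ht : -1 <= t <= 1 by apply/andP; split; lra.
  have [h1 h2] := fsymW hn dC ec fsd ht.
  by rewrite evB ev_comp evN evX !evF opprK h1 h2 subrr.
pose E1 := even_poly F.
have FE1 : F = E1 \Po 'X^2 := evenP FN.
have evsq : forall p (v : R), 0 <= v -> ev v p = ev (Num.sqrt v) (p \Po 'X^2).
  by move=> p v hv; rewrite ev_comp evXn sqr_sqrtr.
have E1S : E1 \Po (1 - 'X) = E1.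
  apply/eqP; rewrite -subr_eq0; apply/eqP; apply: (Zpoly (R := R)) => v /andP[v0 v1].
  rewrite evB ev_comp evB ev1 evX.
  rewrite (evsq E1 v) ?(evsq E1 (1 - v)); try lra.
  rewrite -FE1 !evF.
  set t := Num.sqrt v.
  have t0 : 0 <= t := sqrtr_ge0 v.
  have t2 : t ^+ 2 = v by rewrite sqr_sqrtr //; lra.
  have ht : -1 <= t <= 1 by apply/andP; split; nra.
  have [h1 _] := fsymW hn dC ec fsd ht.
  by rewrite h1 t2 subrr.
have P1 : forall q : {poly rat}, 1 \Po q = 1 by move=> q; rewrite -polyC1 comp_polyC.
pose c : {poly rat} := (2^-1 : rat)%:P.
have cc : c + c = 1.
  by rewrite /c -polyCD -polyC1; congr polyC; lra.
pose G2 := E1 \Po ('X + c).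
have G2N : G2 \Po (- 'X) = G2.
  rewrite /G2 -comp_polyA -{1}E1S -comp_polyA; congr (E1 \Po _).
  have -> : ('X + c) \Po - 'X = c - 'X by rewrite comp_polyD comp_polyX comp_polyC addrC.
  rewrite comp_polyB P1 comp_polyX.
  by rewrite -{1}cc; ring.
pose E2 := even_poly G2.
have G2E2 : G2 = E2 \Po 'X^2 := evenP G2N.
pose d : {poly rat} := (1 - 2^-1 * 2^-1 : rat)%:P.
have dE : d = 1 - c * c by rewrite /d /c polyCB polyC1 polyCM.
pose K := E2 \Po ('X - d).
pose u : {poly rat} := 'X^4 - 'X^2 + 1.
have E1G2 : E1 = G2 \Po ('X - c).
  by rewrite /G2 -comp_polyA comp_polyD comp_polyX comp_polyC subrK comp_polyXr.
have FK : F = K \Po u.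
  rewrite FE1 E1G2 G2E2 /K -!comp_polyA; congr (E2 \Po _).
  rewrite !comp_polyD !rmorphN /= !comp_polyX !comp_polyC comp_Xn_poly -/c -/d dE.
  have -> : ('X^2 - c) ^+ 2 = 'X^4 - (c + c) * 'X^2 + c * c by ring.
  by rewrite cc mul1r /u; ring.
have s1 : size (1 + 'X : {poly rat}) = 2 by rewrite addrC -polyC1 size_XaddC.
have s2 : size (1 - 'X : {poly rat}) = 2 by rewrite -opprB size_opp -polyC1 size_XsubC.
have sF : (size F <= (n./2).+1)%N.
  rewrite /F /Ws (leq_trans (size_sum _ _ _)) //; apply/bigmax_leqP => c0 c0C.
  rewrite (leq_trans (size_mul_leq _ _)) //.
  have := size_poly_exp_leq (1 + 'X : {poly rat}) ((n - hwt c0)./2).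
  have := size_poly_exp_leq (1 - 'X : {poly rat}) ((hwt c0)./2).
  rewrite s1 s2 /= !mul1n.
  have := half_arith hn (ec c0 c0C) (hwt_le c0).
  move: (size _) (size _) => x1 x2.
  move: ((n - hwt c0)./2) ((hwt c0)./2) (n./2) => a1 a2 m h1 h2 h3; clear -h1 h2 h3; lia.
have sE1 : ((size E1).-1 * 2 <= n./2)%N.
  have := size_comp_poly E1 'X^2; rewrite -FE1 size_polyXn /=. move: sF. move: (size F) (size E1) (n./2) => x1 x2 m. lia.
have sG2 : size G2 = size E1 by rewrite /G2 size_comp_poly2 // size_XaddC.
have sE2 : ((size E2).-1 * 2 = (size G2).-1)%N.
  by rewrite G2E2 size_comp_poly size_polyXn.
have sK0 : size K = size E2 by rewrite /K size_comp_poly2 // size_XsubC.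
have sK : (size K <= (n %/ 8).+1)%N.
  have nM : n = (n./2 * 2)%N by rewrite muln2 -{1}(odd_double_half n) (negbTE hn).
  move: sE1 sE2 sG2 sK0 nM.
  move: (size K) (size E2) (size G2) (size E1) (n./2) => k1 k2 k3 k4 m. lia.
have h2 : (2 : rat) ^+ n./2 != 0 by rewrite expf_neq0 // pnatr_eq0.
have F0 : F.[0] = 2 ^+ n./2.
  rewrite -horner_evalE /F Ws_rmorph /= !horner_evalE !hornerE /= ?addr0 ?subr0 Ws11 card_vspace card_Fp // dC natrX //.
have u0 : u.[0] = 1 by rewrite /u !hornerE /=; ring.
exists (fun r => K`_r / 2 ^+ n./2); split.
  rewrite -mulr_suml.
  have -> : \sum_(r < (n %/ 8).+1) K`_r = K.[1].
    by rewrite (horner_coef_wide 1 sK); apply: eq_bigr => r _; rewrite expr1n mulr1.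
  have -> : K.[1] = F.[0] by rewrite [in RHS]FK [in RHS]horner_comp u0.
  by rewrite F0 divff.
move=> t /andP[t0 t1].
rewrite wenum_Wc Wc_Ws // !sqr_sqrtr; try lra.
rewrite -evF FK ev_comp.
have -> : ev t u = t ^+ 4 - t ^+ 2 + 1 by rewrite /u evD evB !evXn ev1.
rewrite /ev (horner_coef_wide _ (n := (n %/ 8).+1)) ?size_map_poly //.
rewrite mulr_sumr; apply: eq_bigr => r _.
rewrite coef_map /= fmorph_div rmorphXn rmorph_nat.
field.
by rewrite expf_neq0 // pnatr_eq0.
Qed.
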